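(* Let $X=\mathbb{R}$, let $\beta,K,\nu,\gamma,\eta,\xi,\zeta>0$ with $\gamma>\eta$, and define $$a(x):=\gamma-\eta x^2,\qquad b(x):=\xi+\zeta(1-x)^2 .$$ Assume $\gamma>(\eta\beta)^{1/2}$ and $\mathcal{R}_0>1$, where $$\mathcal{R}_0:=\frac{K}{\nu}\Big(\gamma-(\eta\beta)^{1/2}\Big)\Big(\xi+\zeta+\zeta\Big(\frac{\beta}{\eta}\Big)^{1/2}\Big).$$ Then the unique solution $(\overline{s}_E,\overline{I}_E)$ of the problem $$\beta\,\overline{s}_E''+\Big[a(x)-\Big(b(x)+\frac1K\Big)\overline{I}_E-\frac{\overline{S}_E}{K}\Big]\overline{s}_E=0\ \ (x\in\mathbb{R}),\qquad \Big(\int_{\mathbb{R}} b(x)\overline{s}_E(x)\,dx-\nu\Big)\overline{I}_E=0,$$ $$\overline{S}_E:=\int_{\mathbb{R}}\overline{s}_E\,dx,\qquad \overline{s}_E(\cdot)>0,\quad 0<\overline{S}_E<\infty,\quad 0<\overline{I}_E<\infty,$$ is given by $$\overline{s}_E(x)=\overline{S}_E\Big(\frac{1}{2\pi\overline{\sigma}_E^2}\Big)^{1/2}\exp\Big[-\frac{(x-\overline{\mu}_E)^2}{2\overline{\sigma}_E^2}\Big],\qquad \overline{\sigma}_E^2=\Big(\frac{\beta}{\eta+\zeta\overline{I}_E}\Big)^{1/2},\quad \overline{\mu}_E=\frac{\zeta\overline{I}_E}{\eta+\zeta\overline{I}_E},$$ $$\overline{S}_E=K\Big(\gamma-\Big(\frac1K+\frac{\eta\zeta}{\eta+\zeta\overline{I}_E}+\xi\Big)\overline{I}_E-\beta^{1/2}(\eta+\zeta\overline{I}_E)^{1/2}\Big)>0,$$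 where $\overline{I}_E$ is the unique positive solution of the algebraic equation $$(1+\xi K)\,\overline{I}_E=K\Big(\gamma-\eta\frac{\zeta\overline{I}_E}{\eta+\zeta\overline{I}_E}-\beta^{1/2}(\eta+\zeta\overline{I}_E)^{1/2}\Big)-F(\overline{I}_E),$$ $$F(y):=\nu\Big(\xi+\zeta\Big(\frac{\zeta y}{\eta+\zeta y}-1\Big)^2+\zeta\Big(\frac{\beta}{\eta+\zeta y}\Big)^{1/2}\Big)^{-1}.$$
   Context: This is the steady-state (endemic equilibrium) problem of the SI model $\partial_t s=(a(x)-N/K)s-b(x)Is+\beta\partial_x^2 s$, $I'=(\int b s\,dx-\nu)I$, $N=\int s\,dx+I$. The quantity $\mathcal{R}_0$ defined in the claim is the basic reproduction number for these choices of $a$ and $b$. *)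

(* Defs.v *)
From Stdlib Require Import Reals.
From Coquelicot Require Import Coquelicot.
Open Scope R_scope.

Definition a_fun (gamma eta : R) (x : R) : R := gamma - eta * x ^ 2.
Definition b_fun (xi zeta : R) (x : R) : R := xi + zeta * (1 - x) ^ 2.

Definition basic_R0 (beta K nu gamma eta xi zeta : R) : R :=
  K / nu * (gamma - sqrt (eta * beta)) * (xi + zeta + zeta * sqrt (beta / eta)).

Definition is_int_R (f : R -> R) (l : R) : Prop :=
  is_RInt_gen f (Rbar_locally m_infty) (Rbar_locally p_infty) l.

Definition endemic_solution (beta K nu gamma eta xi zeta : R)
    (s : R -> R) (I S : R) : Prop :=
  (exists s' s'' : R -> R, forall x,
      is_derive s x (s' x) /\ is_derive s' x (s'' x) /\
      beta * s'' x
        + (a_fun gamma eta x - (b_fun xi zeta x + / K) * I - S / K) * s x = 0) /\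
  is_int_R s S /\
  (exists B, is_int_R (fun x => b_fun xi zeta x * s x) B /\ (B - nu) * I = 0) /\
  (forall x, 0 < s x) /\ 0 < S /\ 0 < I.

Definition F_fun (beta nu eta xi zeta : R) (y : R) : R :=
  nu / (xi + zeta * (zeta * y / (eta + zeta * y) - 1) ^ 2
          + zeta * sqrt (beta / (eta + zeta * y))).

Definition alg_eq (beta K nu gamma eta xi zeta : R) (y : R) : Prop :=
  (1 + xi * K) * y =
    K * (gamma - eta * (zeta * y / (eta + zeta * y))
           - sqrt beta * sqrt (eta + zeta * y))
    - F_fun beta nu eta xi zeta y.

Definition sigma2_E (beta eta zeta I : R) : R := sqrt (beta / (eta + zeta * I)).
Definition mu_E (eta zeta I : R) : R := zeta * I / (eta + zeta * I).

Definition S_E (beta K gamma eta xi zeta I : R) : R :=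
  K * (gamma - (/ K + eta * zeta / (eta + zeta * I) + xi) * I
         - sqrt beta * sqrt (eta + zeta * I)).

Definition s_E (beta eta zeta S I : R) (x : R) : R :=
  S * sqrt (1 / (2 * PI * sigma2_E beta eta zeta I))
    * exp (- (x - mu_E eta zeta I) ^ 2 / (2 * sigma2_E beta eta zeta I)).

(* Main.v *)
Require Import Defs.
From Stdlib Require Import Reals Lra Psatz FunctionalExtensionality.
From Coquelicot Require Import Coquelicot.
Open Scope R_scope.

Lemma int_R_prim (f F : R -> R) (Lm Lp : R) :
  (forall x, is_derive F x (f x)) -> (forall x, continuous f x) ->
  filterlim F (Rbar_locally m_infty) (locally Lm) ->
  filterlim F (Rbar_locally p_infty) (locally Lp) ->
  is_int_R f (Lp - Lm).
Proof.
  intros HD HC Hm Hp. unfold is_int_R.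
  apply (is_RInt_gen_ext (Derive F)).
  - apply Filter_prod with (fun _ => True) (fun _ => True);
      try apply filter_true.
    intros a b _ _ x _. apply is_derive_unique, HD.
  - apply is_RInt_gen_Derive; auto.
    + apply Filter_prod with (fun _ => True) (fun _ => True);
        try apply filter_true.
      intros a b _ _ x _. eexists; apply HD.
    + apply Filter_prod with (fun _ => True) (fun _ => True);
        try apply filter_true.
      intros a b _ _ x _.
      apply (continuous_ext f). intros y. symmetry. apply is_derive_unique, HD.
      apply HC.
Qed.

Definition gf (x : R) := exp (- (x ^ 2)).

Lemma gf_cont x : continuous gf x.
Proof. apply (@ex_derive_continuous R_AbsRing R_NormedModule). unfold gf. auto_derive. auto. Qed.

Definition Pg (t : R) := RInt gf 0 t.

Lemma gf_ex a b : ex_RInt gf a b.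
Proof. apply (@ex_RInt_continuous R_CompleteNormedModule). intros; apply gf_cont. Qed.

Lemma Pg_deriv t : is_derive Pg t (gf t).
Proof.
  apply (is_derive_RInt gf Pg 0).
  - apply filter_forall. intros b. apply (@RInt_correct R_CompleteNormedModule), gf_ex.
  - apply gf_cont.
Qed.

Lemma Pg_ge0 t : 0 <= t -> 0 <= Pg t.
Proof.
  intros Ht. apply RInt_ge_0; auto. apply gf_ex.
  intros; unfold gf; apply Rlt_le, exp_pos.
Qed.

Lemma Pg_odd t : Pg (- t) = - Pg t.
Proof.
  unfold Pg.
  pose proof (RInt_comp_lin gf (-1) 0 0 t) as H.
  replace (-1 * 0 + 0) with 0 in H by ring.
  replace (-1 * t + 0) with (-t) in H by ring.
  rewrite <- H by apply gf_ex.
  change (- RInt gf 0 t) with (opp (RInt gf 0 t)).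
  rewrite <- (@RInt_opp R_CompleteNormedModule) by apply gf_ex.
  apply RInt_ext. intros x _. unfold gf, scal; simpl; unfold mult; simpl.
  unfold opp; simpl. replace ((-1 * x + 0) * ((-1 * x + 0) * 1)) with (x*(x*1)) by ring. ring.
Qed.

Lemma lim_p (g : R -> R) l :
  (forall eps, 0 < eps -> exists M, forall x, M < x -> Rabs (g x - l) < eps) ->
  filterlim g (Rbar_locally p_infty) (locally l).
Proof.
  intros H. apply filterlim_locally. intros eps.
  destruct (H eps (cond_pos eps)) as [M HM]. exists M. intros x Hx.
  apply HM; auto.
Qed.

Lemma lim_m (g : R -> R) l :
  (forall eps, 0 < eps -> exists M, forall x, x < M -> Rabs (g x - l) < eps) ->
  filterlim g (Rbar_locally m_infty) (locally l).
Proof.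
  intros H. apply filterlim_locally. intros eps.
  destruct (H eps (cond_pos eps)) as [M HM]. exists M. intros x Hx.
  apply HM; auto.
Qed.

Lemma lim_p_inv (g : R -> R) l :
  filterlim g (Rbar_locally p_infty) (locally l) ->
  (forall eps, 0 < eps -> exists M, forall x, M < x -> Rabs (g x - l) < eps).
Proof.
  intros H eps Heps. apply filterlim_locally with (eps := mkposreal eps Heps) in H.
  destruct H as [M HM]. exists M. intros x Hx. apply (HM x Hx).
Qed.

Lemma lim_m_inv (g : R -> R) l :
  filterlim g (Rbar_locally m_infty) (locally l) ->
  (forall eps, 0 < eps -> exists M, forall x, x < M -> Rabs (g x - l) < eps).
Proof.
  intros H eps Heps. apply filterlim_locally with (eps := mkposreal eps Heps) in H.
  destruct H as [M HM]. exists M. intros x Hx. apply (HM x Hx).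
Qed.

Definition jf (u x : R) := exp (- (u ^ 2 * (1 + x ^ 2))) / (1 + x ^ 2).
Definition djf (u x : R) := -2 * u * exp (- (u ^ 2 * (1 + x ^ 2))).
Definition Jg (t : R) := RInt (fun x => jf t x) 0 1.

Lemma pos1x2 x : 0 < 1 + x ^ 2.
Proof. nra. Qed.

Lemma jf_der u x : is_derive (fun z => jf z x) u (djf u x).
Proof.
  unfold jf, djf. auto_derive.
  - pose proof (pos1x2 x). lra.
  - replace (- (u * (u * 1) * (1 + x * (x * 1)))) with (- (u ^ 2 * (1 + x ^ 2))) by (simpl; ring). field. pose proof (pos1x2 x). simpl in *; lra.
Qed.

Lemma jf_cont u x : continuous (fun y => jf u y) x.
Proof.
  apply (@ex_derive_continuous R_AbsRing R_NormedModule). unfold jf.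
  auto_derive. pose proof (pos1x2 x). lra.
Qed.

Lemma jf_ex u a b : ex_RInt (fun x => jf u x) a b.
Proof. apply (@ex_RInt_continuous R_CompleteNormedModule). intros; apply jf_cont. Qed.

Lemma djf_cont u x : continuous (fun y => djf u y) x.
Proof.
  apply (@ex_derive_continuous R_AbsRing R_NormedModule). unfold djf.
  auto_derive. auto.
Qed.

Lemma djf_ex u a b : ex_RInt (fun x => djf u x) a b.
Proof. apply (@ex_RInt_continuous R_CompleteNormedModule). intros; apply djf_cont. Qed.

Lemma cont_exp_pt x : continuity_pt exp x.
Proof. apply continuity_pt_filterlim. apply continuous_exp. Qed.

Lemma djf_cont2 u v : continuity_2d_pt djf u v.
Proof.
  unfold djf.
  apply continuity_2d_pt_mult.
  - apply continuity_2d_pt_mult.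
    + apply continuity_2d_pt_const.
    + apply continuity_2d_pt_id1.
  - apply (continuity_1d_2d_pt_comp exp (fun u v => - (u ^ 2 * (1 + v ^ 2)))).
    + apply cont_exp_pt.
    + apply continuity_2d_pt_opp.
      apply (continuity_2d_pt_ext (fun u v => (u * u) * (1 + v * v))).
      { intros; ring. }
      apply continuity_2d_pt_mult.
      * apply continuity_2d_pt_mult; apply continuity_2d_pt_id1.
      * apply continuity_2d_pt_plus. apply continuity_2d_pt_const.
        apply continuity_2d_pt_mult; apply continuity_2d_pt_id2.
Qed.

Lemma Jg_deriv t : is_derive Jg t (RInt (fun x => djf t x) 0 1).
Proof.
  assert (H := is_derive_RInt_param (fun u x => jf u x) 0 1 t).
  rewrite (RInt_ext (fun x => Derive (fun u => jf u x) t) (fun x => djf t x)) in H.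
  - apply H.
    + apply filter_forall. intros y x _. eexists. apply jf_der.
    + intros x _. apply (continuity_2d_pt_ext djf).
      { intros u v. symmetry. apply is_derive_unique, jf_der. }
      apply djf_cont2.
    + apply filter_forall. intros y. apply jf_ex.
  - intros x _. apply is_derive_unique, jf_der.
Qed.

Lemma djf_int t : RInt (fun x => djf t x) 0 1 = -2 * gf t * Pg t.
Proof.
  rewrite (RInt_ext (fun x => djf t x)
     (fun x => scal (-2 * gf t) (scal t (gf (t * x + 0))))).
  2:{ intros x _. unfold djf, gf, scal; simpl; unfold mult; simpl.
      replace (- (t * (t * 1) * (1 + x * (x * 1)))) with (- (t * (t * 1)) + - ((t * x + 0) * ((t * x + 0) * 1))) by ring.
      rewrite exp_plus. ring. }
  rewrite (@RInt_scal R_CompleteNormedModule).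
  2:{ apply (@ex_RInt_continuous R_CompleteNormedModule). intros.
      apply (@ex_derive_continuous R_AbsRing R_NormedModule). unfold gf, scal; simpl; unfold mult; simpl.
      auto_derive. auto. }
  rewrite (@RInt_comp_lin R_CompleteNormedModule) by apply gf_ex.
  unfold Pg, scal; simpl; unfold mult; simpl.
  replace (t * 0 + 0) with 0 by ring. replace (t * 1 + 0) with t by ring. ring.
Qed.

Definition hg (t : R) := Pg t ^ 2 + Jg t.

Lemma hg_deriv t : is_derive hg t 0.
Proof.
  unfold hg.
  replace 0 with (INR 2 * gf t * (Pg t) ^ Init.Nat.pred 2 + RInt (fun x => djf t x) 0 1).
  2:{ rewrite djf_int. simpl. ring. }
  apply (@is_derive_plus R_AbsRing R_NormedModule).
  - apply (is_derive_pow Pg 2 t (gf t)). apply Pg_deriv.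
  - apply Jg_deriv.
Qed.

Lemma Jg0 : Jg 0 = PI / 4.
Proof.
  unfold Jg. rewrite <- atan_1.
  replace (atan 1) with (atan 1 - atan 0) by (rewrite atan_0; ring).
  apply is_RInt_unique.
  apply (@is_RInt_derive R_CompleteNormedModule atan (fun x => jf 0 x)).
  - intros x _. replace (jf 0 x) with (/ (1 + x²)).
    apply is_derive_atan. unfold jf, Rsqr. replace (- (0 ^ 2 * (1 + x ^ 2))) with 0 by ring.
    rewrite exp_0. field. pose proof (pos1x2 x). simpl in H. lra.
  - intros; apply jf_cont.
Qed.

Lemma hg_const t : hg t = PI / 4.
Proof.
  destruct (MVT_gen hg 0 t (fun _ => 0)) as [c [_ Hc]].
  - intros; apply hg_deriv.
  - intros. apply continuity_pt_filterlim.
    apply (@ex_derive_continuous R_AbsRing R_NormedModule). eexists; apply hg_deriv.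
  - assert (hg 0 = PI / 4).
    { unfold hg. rewrite Jg0. unfold Pg. rewrite RInt_point. unfold zero; simpl. ring. }
    lra.
Qed.

Lemma Jg_bounds t : 0 <= Jg t <= gf t.
Proof.
  unfold Jg. split.
  - apply RInt_ge_0. lra. apply jf_ex. intros x _. unfold jf.
    apply Rlt_le, Rdiv_lt_0_compat. apply exp_pos. apply pos1x2.
  - replace (gf t) with (RInt (fun _ => gf t) 0 1).
    2:{ rewrite RInt_const. unfold scal; simpl; unfold mult; simpl. ring. }
    apply RInt_le. lra. apply jf_ex.
    apply (@ex_RInt_continuous R_CompleteNormedModule). intros; apply continuous_const.
    intros x _. unfold jf, gf.
    assert (exp (- (t ^ 2 * (1 + x ^ 2))) <= exp (- t ^ 2)).
    { destruct (Req_dec (t^2 * x^2) 0) as [E|E].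
      - right. f_equal. ring_simplify. nra.
      - left. apply exp_increasing. nra. }
    pose proof (pos1x2 x). pose proof (exp_pos (- (t ^ 2 * (1 + x ^ 2)))).
    apply Rle_trans with (exp (- (t ^ 2 * (1 + x ^ 2)))).
    + apply Rmult_le_reg_r with (1 + x^2); auto. unfold Rdiv.
      rewrite Rmult_assoc, Rinv_l by lra. nra.
    + replace (- (t ^ 2)) with (- t ^ 2) by ring. auto.
Qed.

Lemma exp_neg_le y : 0 <= y -> exp (- y) <= / (1 + y).
Proof.
  intros Hy. pose proof (exp_ineq1_le y).
  rewrite exp_Ropp. apply Rinv_le_contravar; lra.
Qed.

Lemma gf_le z : gf z <= / (1 + z ^ 2).
Proof. unfold gf. apply exp_neg_le. nra. Qed.

Lemma gf_pos z : 0 < gf z.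
Proof. apply exp_pos. Qed.

Lemma zgf_bound z : z <> 0 -> Rabs (z * gf z) <= / Rabs z.
Proof.
  intros Hz. rewrite Rabs_mult, (Rabs_pos_eq (gf z)) by (apply Rlt_le, gf_pos).
  pose proof (gf_le z). pose proof (Rabs_pos_lt z Hz).
  assert (Rabs z ^ 2 = z ^ 2) by (rewrite RPow_abs; apply Rabs_pos_eq; nra).
  apply Rle_trans with (Rabs z * / (1 + z ^ 2)).
  - apply Rmult_le_compat_l; auto. apply Rlt_le; auto.
  - apply Rmult_le_reg_l with (Rabs z * (1 + z^2)). nra.
    field_simplify; try lra. rewrite <- H1. nra.
Qed.

Lemma gf_lim_p : is_lim gf p_infty 0.
Proof.
  apply lim_p. intros eps Heps. exists (/ eps). intros x Hx.
  pose proof (Rinv_0_lt_compat eps Heps).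
  rewrite Rminus_0_r, Rabs_pos_eq by (apply Rlt_le, gf_pos).
  eapply Rle_lt_trans. apply gf_le.
  rewrite <- (Rinv_inv eps). apply Rinv_lt_contravar. nra. nra.
Qed.

Lemma gf_even z : gf (- z) = gf z.
Proof. unfold gf. f_equal. ring. Qed.

Lemma gf_lim_m : is_lim gf m_infty 0.
Proof.
  apply lim_m. intros eps Heps. destruct (lim_p_inv gf 0 gf_lim_p eps Heps) as [M HM].
  exists (- M). intros x Hx. rewrite <- gf_even. apply HM. lra.
Qed.

Lemma zgf_lim_p : is_lim (fun z => z * gf z) p_infty 0.
Proof.
  apply lim_p. intros eps Heps. exists (/ eps). intros x Hx.
  pose proof (Rinv_0_lt_compat eps Heps).
  rewrite Rminus_0_r. eapply Rle_lt_trans. apply zgf_bound. lra.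
  rewrite Rabs_pos_eq by lra.
  rewrite <- (Rinv_inv eps). apply Rinv_lt_contravar. nra. nra.
Qed.

Lemma zgf_lim_m : is_lim (fun z => z * gf z) m_infty 0.
Proof.
  apply lim_m. intros eps Heps. exists (- / eps). intros x Hx.
  pose proof (Rinv_0_lt_compat eps Heps).
  rewrite Rminus_0_r. eapply Rle_lt_trans. apply zgf_bound. lra.
  rewrite Rabs_left by lra.
  rewrite <- (Rinv_inv eps). apply Rinv_lt_contravar. nra. nra.
Qed.

Lemma Jg_lim : is_lim Jg p_infty 0.
Proof.
  apply lim_p. intros eps Heps. destruct (lim_p_inv gf 0 gf_lim_p eps Heps) as [M HM].
  exists M. intros x Hx. specialize (HM x Hx). pose proof (Jg_bounds x). pose proof (gf_pos x).
  rewrite Rminus_0_r in HM |- *. rewrite Rabs_pos_eq in HM by lra. rewrite Rabs_pos_eq by lra. lra.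


Qed.

Lemma Pg_sq t : Pg t ^ 2 = PI / 4 - Jg t.
Proof. pose proof (hg_const t). unfold hg in H. lra. Qed.

Lemma sqrtPI4 : sqrt (PI / 4) = sqrt PI / 2.
Proof.
  rewrite sqrt_div_alt by lra. f_equal.
  replace 4 with (2 ^ 2) by ring. apply sqrt_pow2. lra.
Qed.

Lemma Pg_lim_p : is_lim Pg p_infty (sqrt PI / 2).
Proof.
  rewrite <- sqrtPI4.
  apply (is_lim_ext_loc (fun t => sqrt (PI / 4 - Jg t))).
  - exists 0. intros t Ht. rewrite <- Pg_sq. apply sqrt_pow2. apply Pg_ge0. lra.
  - apply (filterlim_comp _ _ _ (fun t => PI / 4 - Jg t) sqrt _ (locally (PI/4))).
    + assert (H : is_lim (fun t => PI / 4 - Jg t) p_infty (PI / 4 - 0)).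
      { apply (is_lim_minus' (fun _ => PI / 4) Jg p_infty). apply is_lim_const. apply Jg_lim. }
      rewrite Rminus_0_r in H. exact H.
    + apply continuous_sqrt.
Qed.

Lemma Pg_lim_m : is_lim Pg m_infty (- (sqrt PI / 2)).
Proof.
  apply lim_m. intros eps Heps. destruct (lim_p_inv Pg _ Pg_lim_p eps Heps) as [M HM].
  exists (- M). intros x Hx. replace x with (- - x) by ring. rewrite Pg_odd.
  replace (- Pg (- x) - - (sqrt PI / 2)) with (- (Pg (- x) - sqrt PI / 2)) by ring.
  rewrite Rabs_Ropp. apply HM. lra.
Qed.

Lemma lim_aff_p g l r m : 0 < r -> is_lim g p_infty (Finite l) ->
  is_lim (fun x => g ((x - m) / r)) p_infty l.
Proof.
  intros Hr H. apply lim_p. intros eps Heps.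
  destruct (lim_p_inv g l H eps Heps) as [M HM].
  exists (m + r * M). intros x Hx. apply HM.
  apply Rmult_lt_reg_l with r; auto. field_simplify; lra.
Qed.

Lemma lim_aff_m g l r m : 0 < r -> is_lim g m_infty (Finite l) ->
  is_lim (fun x => g ((x - m) / r)) m_infty l.
Proof.
  intros Hr H. apply lim_m. intros eps Heps.
  destruct (lim_m_inv g l H eps Heps) as [M HM].
  exists (m + r * M). intros x Hx. apply HM.
  apply Rmult_lt_reg_l with r; auto. field_simplify; lra.
Qed.

Lemma is_lim_scal_fin f a x (l : R) : is_lim f x l ->
  is_lim (fun y => a * f y) x (a * l).
Proof.
  intros H. assert (E : Rbar_mult a l = Finite (a * l)) by reflexivity.
  rewrite <- E. apply is_lim_scal_l; auto.
Qed.

Definition phi (v m x : R) := exp (- (x - m) ^ 2 / (2 * v)).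

Lemma phi_gf v m x : 0 < v -> phi v m x = gf ((x - m) / sqrt (2 * v)).
Proof.
  intros Hv. unfold phi, gf. f_equal.
  assert (Hs : sqrt (2 * v) ^ 2 = 2 * v) by (apply pow2_sqrt; lra).
  assert (0 < sqrt (2 * v)) by (apply sqrt_lt_R0; lra).
  field_simplify; try lra. rewrite Hs. field. lra.
Qed.

Lemma phi_pos v m x : 0 < phi v m x.
Proof. apply exp_pos. Qed.

Lemma phi_deriv v m x : 0 < v -> is_derive (phi v m) x (- (x - m) / v * phi v m x).
Proof.
  intros Hv. unfold phi. auto_derive; auto.
  replace (- ((x + - m) * ((x + - m) * 1)) * / (2 * v)) with (- (x - m) ^ 2 / (2 * v)) by (simpl; field; lra). field. lra.
Qed.

Lemma phi_cont v m x : 0 < v -> continuous (phi v m) x.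
Proof.
  intros Hv. apply (@ex_derive_continuous R_AbsRing R_NormedModule).
  eexists. apply phi_deriv; auto.
Qed.

Definition Phi (v m x : R) := sqrt (2 * v) * Pg ((x - m) / sqrt (2 * v)).

Lemma Phi_deriv v m x : 0 < v -> is_derive (Phi v m) x (phi v m x).
Proof.
  intros Hv. assert (0 < sqrt (2 * v)) by (apply sqrt_lt_R0; lra).
  unfold Phi. rewrite phi_gf by auto.
  replace (gf ((x - m) / sqrt (2 * v))) with
    (sqrt (2 * v) * ((/ sqrt (2 * v)) * gf ((x - m) / sqrt (2 * v)))) by (field; lra).
  apply is_derive_scal.
  apply (is_derive_comp Pg (fun x => (x - m) / sqrt (2 * v))).
  apply Pg_deriv.
  replace (/ sqrt (2 * v)) with (1 / sqrt (2 * v)) by (field; lra).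
  auto_derive; auto.
Qed.

Lemma Phi_lim_p v m : 0 < v -> is_lim (Phi v m) p_infty (sqrt (2 * v) * (sqrt PI / 2)).
Proof.
  intros Hv. assert (0 < sqrt (2 * v)) by (apply sqrt_lt_R0; lra).
  unfold Phi. apply (is_lim_scal_l (fun x => Pg ((x - m) / sqrt (2 * v))) _ _ (sqrt PI / 2)).
  apply lim_aff_p; auto. apply Pg_lim_p.
Qed.

Lemma Phi_lim_m v m : 0 < v -> is_lim (Phi v m) m_infty (sqrt (2 * v) * - (sqrt PI / 2)).
Proof.
  intros Hv. assert (0 < sqrt (2 * v)) by (apply sqrt_lt_R0; lra).
  unfold Phi. apply (is_lim_scal_l (fun x => Pg ((x - m) / sqrt (2 * v))) _ _ (- (sqrt PI / 2))).
  apply lim_aff_m; auto. apply Pg_lim_m.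
Qed.

Lemma phi_lim_p v m : 0 < v -> is_lim (phi v m) p_infty 0.
Proof.
  intros Hv. assert (0 < sqrt (2 * v)) by (apply sqrt_lt_R0; lra).
  apply (is_lim_ext (fun x => gf ((x - m) / sqrt (2 * v)))).
  intros; rewrite phi_gf; auto.
  apply lim_aff_p; auto. apply gf_lim_p.
Qed.

Lemma phi_lim_m v m : 0 < v -> is_lim (phi v m) m_infty 0.
Proof.
  intros Hv. assert (0 < sqrt (2 * v)) by (apply sqrt_lt_R0; lra).
  apply (is_lim_ext (fun x => gf ((x - m) / sqrt (2 * v)))).
  intros; rewrite phi_gf; auto.
  apply lim_aff_m; auto. apply gf_lim_m.
Qed.

Lemma xphi_lim_p v m : 0 < v -> is_lim (fun x => (x - m) * phi v m x) p_infty 0.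
Proof.
  intros Hv. assert (0 < sqrt (2 * v)) by (apply sqrt_lt_R0; lra).
  apply (is_lim_ext (fun x => sqrt (2 * v) * (((x - m) / sqrt (2 * v)) * gf ((x - m) / sqrt (2 * v))))).
  intros; rewrite phi_gf; auto. field; lra.
  replace (Finite 0) with (Rbar_mult (sqrt (2 * v)) 0) by (rewrite Rbar_mult_0_r; auto).
  apply (is_lim_scal_l (fun x => ((x - m) / sqrt (2 * v)) * gf ((x - m) / sqrt (2 * v)))).
  apply (lim_aff_p (fun z => z * gf z)); auto. apply zgf_lim_p.
Qed.

Lemma xphi_lim_m v m : 0 < v -> is_lim (fun x => (x - m) * phi v m x) m_infty 0.
Proof.
  intros Hv. assert (0 < sqrt (2 * v)) by (apply sqrt_lt_R0; lra).
  apply (is_lim_ext (fun x => sqrt (2 * v) * (((x - m) / sqrt (2 * v)) * gf ((x - m) / sqrt (2 * v))))).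
  intros; rewrite phi_gf; auto. field; lra.
  replace (Finite 0) with (Rbar_mult (sqrt (2 * v)) 0) by (rewrite Rbar_mult_0_r; auto).
  apply (is_lim_scal_l (fun x => ((x - m) / sqrt (2 * v)) * gf ((x - m) / sqrt (2 * v)))).
  apply (lim_aff_m (fun z => z * gf z)); auto. apply zgf_lim_m.
Qed.

Lemma int_phi v m A : 0 < v ->
  is_int_R (fun x => A * phi v m x) (A * (sqrt (2 * v) * sqrt PI)).
Proof.
  intros Hv.
  replace (A * (sqrt (2 * v) * sqrt PI)) with
     (A * (sqrt (2 * v) * (sqrt PI / 2)) - A * (sqrt (2 * v) * - (sqrt PI / 2))) by field.
  apply (int_R_prim _ (fun x => A * Phi v m x)).
  - intros x. apply is_derive_scal. apply Phi_deriv; auto.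
  - intros x. apply (@ex_derive_continuous R_AbsRing R_NormedModule).
    eexists. apply is_derive_scal. apply phi_deriv; auto.
  - apply (is_lim_scal_fin (Phi v m) A m_infty). apply Phi_lim_m; auto.
  - apply (is_lim_scal_fin (Phi v m) A p_infty). apply Phi_lim_p; auto.
Qed.

Lemma xphi_deriv v m x : 0 < v ->
  is_derive (fun y => (y - m) * phi v m y) x (phi v m x - (x - m) ^ 2 / v * phi v m x).
Proof.
  intros Hv.
  replace (phi v m x - (x - m) ^ 2 / v * phi v m x) with
    (plus (mult 1 (phi v m x)) (mult (x - m) (- (x - m) / v * phi v m x))).
  2:{ unfold plus, mult; simpl. field. lra. }
  apply (@is_derive_mult R_AbsRing (fun y => y - m) (phi v m)).
  - auto_derive; auto.
  - apply phi_deriv; auto.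
  - intros; apply Rmult_comm.
Qed.

Lemma int_R_prim' (f F : R -> R) (Lm Lp : R) :
  (forall x, is_derive F x (f x)) -> (forall x, continuous f x) ->
  is_lim F m_infty Lm -> is_lim F p_infty Lp -> is_int_R f (Lp - Lm).
Proof. intros; apply (int_R_prim f F); auto. Qed.

Lemma int_bphi v m A xi zeta : 0 < v ->
  is_int_R (fun x => b_fun xi zeta x * (A * phi v m x))
    (A * (sqrt (2 * v) * sqrt PI) * (xi + zeta * (m - 1) ^ 2 + zeta * v)).
Proof.
  intros Hv.
  set (c1 := xi + zeta * (m - 1) ^ 2 + zeta * v).
  set (G := fun x => A * (c1 * Phi v m x - 2 * zeta * (m - 1) * v * phi v m x
                          - zeta * v * ((x - m) * phi v m x))).
  replace (A * (sqrt (2 * v) * sqrt PI) * c1) with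
    (A * (c1 * (sqrt (2 * v) * (sqrt PI / 2)) - 2 * zeta * (m - 1) * v * 0 - zeta * v * 0)
     - A * (c1 * (sqrt (2 * v) * - (sqrt PI / 2)) - 2 * zeta * (m - 1) * v * 0 - zeta * v * 0))
    by field.
  apply (int_R_prim' _ G).
  - intros x. unfold G.
    replace (b_fun xi zeta x * (A * phi v m x)) with
      (A * (c1 * phi v m x - 2 * zeta * (m - 1) * v * (- (x - m) / v * phi v m x)
        - zeta * v * (phi v m x - (x - m) ^ 2 / v * phi v m x))).
    2:{ unfold b_fun, c1. field. lra. }
    apply is_derive_scal.
    apply (@is_derive_minus R_AbsRing R_NormedModule).
    apply (@is_derive_minus R_AbsRing R_NormedModule).
    + apply is_derive_scal. apply Phi_deriv; auto.
    + apply is_derive_scal. apply phi_deriv; auto.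
    + apply is_derive_scal. apply xphi_deriv; auto.
  - intros x. apply (@ex_derive_continuous R_AbsRing R_NormedModule).
    unfold b_fun. apply ex_derive_mult.
    + auto_derive; auto.
    + eexists. apply is_derive_scal. apply phi_deriv; auto.
  - unfold G. apply (is_lim_scal_fin (fun x => (c1 * Phi v m x - 2 * zeta * (m - 1) * v * phi v m x
                          - zeta * v * ((x - m) * phi v m x)))).
    apply (is_lim_minus' _ _ m_infty). apply (is_lim_minus' _ _ m_infty).
    + apply is_lim_scal_fin. apply Phi_lim_m; auto.
    + apply is_lim_scal_fin. apply phi_lim_m; auto.
    + apply is_lim_scal_fin. apply xphi_lim_m; auto.
  - unfold G. apply (is_lim_scal_fin (fun x => (c1 * Phi v m x - 2 * zeta * (m - 1) * v * phi v m x
                          - zeta * v * ((x - m) * phi v m x)))).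
    apply (is_lim_minus' _ _ p_infty). apply (is_lim_minus' _ _ p_infty).
    + apply is_lim_scal_fin. apply Phi_lim_p; auto.
    + apply is_lim_scal_fin. apply phi_lim_p; auto.
    + apply is_lim_scal_fin. apply xphi_lim_p; auto.
Qed.

Lemma int_extract (s : R -> R) S :
  is_int_R s S ->
  exists M N, forall a b, a < M -> N < b -> exists y, is_RInt s a b y /\ Rabs (y - S) < 1.
Proof.
  intros H. unfold is_int_R, is_RInt_gen, filterlimi, filter_le, filtermapi in H.
  assert (HP : locally S (fun y => Rabs (y - S) < 1)).
  { exists (mkposreal 1 Rlt_0_1). intros y Hy. apply Hy. }
  specialize (H _ HP). destruct H as [Q R0 HQ HR HQR].
  destruct HQ as [M HM]. destruct HR as [N HN].
  exists M, N. intros a b Ha Hb. apply (HQR a b (HM a Ha) (HN b Hb)).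
Qed.

Lemma cont_ex (s : R -> R) a b : (forall x, continuous s x) -> ex_RInt s a b.
Proof. intros H. apply (@ex_RInt_continuous R_CompleteNormedModule). intros; apply H. Qed.

Lemma not_int_right (s : R -> R) S k Y :
  (forall x, continuous s x) -> (forall x, 0 < s x) -> 0 < k ->
  (forall x, Y <= x -> k <= s x) -> is_int_R s S -> False.
Proof.
  intros Hc Hp Hk Hb H. destruct (int_extract s S H) as [M [N HMN]].
  set (a := Rmin (M - 1) Y). set (b := Rmax (N + 1) Y + (Rabs S + 2) / k).
  assert (Ha : a < M) by (unfold a; pose proof (Rmin_l (M-1) Y); lra).
  assert (HaY : a <= Y) by (unfold a; apply Rmin_r).
  assert (Hq : 0 < (Rabs S + 2) / k) by (apply Rdiv_lt_0_compat; [pose proof (Rabs_pos S)|]; lra).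
  assert (Hb' : N < b) by (unfold b; pose proof (Rmax_l (N+1) Y); lra).
  assert (HYb : Y <= b) by (unfold b; pose proof (Rmax_r (N+1) Y); lra).
  destruct (HMN a b Ha Hb') as [y [Hy1 Hy2]].
  apply (@is_RInt_unique R_CompleteNormedModule) in Hy1.
  rewrite <- (@RInt_Chasles R_CompleteNormedModule s a Y b) in Hy1 by (apply cont_ex; auto).
  assert (0 <= RInt s a Y).
  { apply RInt_ge_0; auto. apply cont_ex; auto. intros; apply Rlt_le, Hp. }
  assert (k * (b - Y) <= RInt s Y b).
  { replace (k * (b - Y)) with (RInt (fun _ => k) Y b).
    2:{ rewrite RInt_const. unfold scal; simpl; unfold mult; simpl. ring. }
    apply RInt_le; auto. apply cont_ex; intros; apply continuous_const. apply cont_ex; auto.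
    intros x Hx. apply Hb. lra. }
  assert (k * (b - Y) >= Rabs S + 2).
  { unfold b. pose proof (Rmax_r (N+1) Y).
    apply Rle_ge. apply Rle_trans with (k * ((Rabs S + 2) / k)).
    right. field. lra. apply Rmult_le_compat_l; lra. }
  unfold plus in Hy1; simpl in Hy1.
  pose proof (Rabs_le_between' y S 1). pose proof (Rle_abs S).
  apply Rabs_def2 in Hy2. lra.
Qed.

Lemma not_int_left (s : R -> R) S k Y :
  (forall x, continuous s x) -> (forall x, 0 < s x) -> 0 < k ->
  (forall x, x <= Y -> k <= s x) -> is_int_R s S -> False.
Proof.
  intros Hc Hp Hk Hb H. destruct (int_extract s S H) as [M [N HMN]].
  set (a := Rmin (M - 1) Y - (Rabs S + 2) / k). set (b := Rmax (N + 1) Y).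
  assert (Hq : 0 < (Rabs S + 2) / k) by (apply Rdiv_lt_0_compat; [pose proof (Rabs_pos S)|]; lra).
  assert (Ha : a < M) by (unfold a; pose proof (Rmin_l (M-1) Y); lra).
  assert (HaY : a <= Y) by (unfold a; pose proof (Rmin_r (M-1) Y); lra).
  assert (Hb' : N < b) by (unfold b; pose proof (Rmax_l (N+1) Y); lra).
  assert (HYb : Y <= b) by (unfold b; pose proof (Rmax_r (N+1) Y); lra).
  destruct (HMN a b Ha Hb') as [y [Hy1 Hy2]].
  apply (@is_RInt_unique R_CompleteNormedModule) in Hy1.
  rewrite <- (@RInt_Chasles R_CompleteNormedModule s a Y b) in Hy1 by (apply cont_ex; auto).
  assert (0 <= RInt s Y b).
  { apply RInt_ge_0; auto. apply cont_ex; auto. intros; apply Rlt_le, Hp. }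
  assert (k * (Y - a) <= RInt s a Y).
  { replace (k * (Y - a)) with (RInt (fun _ => k) a Y).
    2:{ rewrite RInt_const. unfold scal; simpl; unfold mult; simpl. ring. }
    apply RInt_le; auto. apply cont_ex; intros; apply continuous_const. apply cont_ex; auto.
    intros x Hx. apply Hb. lra. }
  assert (k * (Y - a) >= Rabs S + 2).
  { unfold a. pose proof (Rmin_r (M-1) Y).
    apply Rle_ge. apply Rle_trans with (k * ((Rabs S + 2) / k)).
    right. field. lra. apply Rmult_le_compat_l; lra. }
  unfold plus in Hy1; simpl in Hy1.
  pose proof (Rle_abs S).
  apply Rabs_def2 in Hy2. lra.
Qed.

Lemma deriv_cpt f x l : is_derive f x l -> continuity_pt f x.
Proof.
  intros H. apply continuity_pt_filterlim.
  apply (@ex_derive_continuous R_AbsRing R_NormedModule). eexists; eauto.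
Qed.

Lemma mvt (f df : R -> R) a b : a <= b -> (forall x, is_derive f x (df x)) ->
  exists c, a <= c <= b /\ f b - f a = df c * (b - a).
Proof.
  intros Hab H. destruct (MVT_gen f a b df) as [c [Hc E]].
  - intros; apply H.
  - intros; eapply deriv_cpt; apply H.
  - exists c. rewrite Rmin_left, Rmax_right in Hc by lra. auto.
Qed.

Lemma exp_le_exp x y : x <= y -> exp x <= exp y.
Proof. intros [H|H]. left; apply exp_increasing; auto. subst; lra. Qed.

Definition psi2 (v m x : R) := exp ((x - m) ^ 2 / v).

Lemma phi_psi v m x : 0 < v -> phi v m x * phi v m x * psi2 v m x = 1.
Proof.
  intros Hv. unfold phi, psi2. rewrite Rmult_assoc, <- !exp_plus.
  rewrite <- exp_0. f_equal. field. lra.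
Qed.

Lemma phi_le1 v m x : 0 < v -> phi v m x <= 1.
Proof.
  intros Hv. unfold phi. rewrite <- exp_0. apply exp_le_exp.
  apply Rmult_le_reg_r with (2 * v). lra. unfold Rdiv. rewrite Rmult_assoc, Rinv_l by lra.
  pose proof (pow2_ge_0 (x - m)). lra.
Qed.

Lemma psi2_ge1 v m x : 0 < v -> 1 <= psi2 v m x.
Proof.
  intros Hv. unfold psi2. rewrite <- exp_0. apply exp_le_exp.
  apply Rdiv_le_0_compat; [apply pow2_ge_0 | lra].
Qed.

Section ODE.
Variables (s s1 s2 : R -> R) (v m c S : R).
Hypothesis Hv : 0 < v.
Hypothesis H1 : forall x, is_derive s x (s1 x).
Hypothesis H2 : forall x, is_derive s1 x (s2 x).
Hypothesis Hode : forall x, s2 x = ((x - m) ^ 2 / v ^ 2 + c) * s x.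
Hypothesis Hpos : forall x, 0 < s x.
Hypothesis Hint : is_int_R s S.

Let W x := s1 x * phi v m x + s x * ((x - m) / v * phi v m x).
Let u x := s x / phi v m x.
Let kap := c + / v.

Lemma W_deriv x : is_derive W x (kap * s x * phi v m x).
Proof.
  unfold W.
  pose proof (phi_deriv v m x Hv) as Dp.
  assert (Dq : is_derive (fun y => (y - m) / v * phi v m y) x
                  (1 / v * phi v m x + (x - m) / v * (- (x - m) / v * phi v m x))).
  { apply (is_derive_ext (fun y => mult ((y - m) / v) (phi v m y)) _ x). { intros; reflexivity. }
    replace (1 / v * phi v m x + (x - m) / v * (- (x - m) / v * phi v m x)) with
      (plus (mult (1 / v) (phi v m x)) (mult ((x - m) / v) (- (x - m) / v * phi v m x))) by reflexivity.
    apply (@is_derive_mult R_AbsRing (fun y => (y - m) / v) (phi v m)). auto_derive; auto. exact Dp. intros; apply Rmult_comm. }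
  replace (kap * s x * phi v m x) with
    (plus (plus (mult (s2 x) (phi v m x)) (mult (s1 x) (- (x - m) / v * phi v m x)))
          (plus (mult (s1 x) ((x - m) / v * phi v m x))
                (mult (s x) (1 / v * phi v m x + (x - m) / v * (- (x - m) / v * phi v m x))))).
  2:{ unfold plus, mult; simpl. rewrite Hode. unfold kap. field. lra. }
  apply (@is_derive_plus R_AbsRing R_NormedModule (fun y => s1 y * phi v m y)
           (fun y => s y * ((y - m) / v * phi v m y))).
  - apply (@is_derive_mult R_AbsRing s1 (phi v m)); auto. intros; apply Rmult_comm.
  - apply (@is_derive_mult R_AbsRing s (fun y => (y - m) / v * phi v m y)); auto.
    intros; apply Rmult_comm.
Qed.

Lemma u_deriv x : is_derive u x (W x * psi2 v m x).
Proof.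
  unfold u, W.
  assert (Hph := phi_pos v m x).
  pose proof (phi_deriv v m x Hv) as Dp.
  apply (is_derive_ext (fun y => mult (s y) (/ phi v m y)) _ x). { intros; reflexivity. }
  assert (Di := is_derive_inv (phi v m) x _ Dp ltac:(lra)).
  replace ((s1 x * phi v m x + s x * ((x - m) / v * phi v m x)) * psi2 v m x) with
    (plus (mult (s1 x) (/ phi v m x)) (mult (s x) (- (- (x - m) / v * phi v m x) / (phi v m x ^ 2)))).
  2:{ unfold plus, mult; simpl. pose proof (phi_psi v m x Hv).
      assert (E : psi2 v m x = / (phi v m x * phi v m x)).
      { apply (Rmult_eq_reg_l (phi v m x * phi v m x)); [rewrite Rinv_r by nra; lra | nra]. }
      rewrite E. field. lra. }
  apply (@is_derive_mult R_AbsRing s (fun y => / phi v m y)); auto. intros; apply Rmult_comm.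
Qed.

Lemma u_pos x : 0 < u x.
Proof. unfold u. apply Rdiv_lt_0_compat; auto. apply phi_pos. Qed.

Lemma s_cont x : continuous s x.
Proof. apply (@ex_derive_continuous R_AbsRing R_NormedModule). eexists; apply H1. Qed.

Lemma s_eq x : s x = u x * phi v m x.
Proof. unfold u. field. pose proof (phi_pos v m x). lra. Qed.

Lemma W_mono_up a b : a <= b -> 0 <= kap -> W a <= W b.
Proof.
  intros Hab Hk. destruct (mvt W (fun x => kap * s x * phi v m x) a b Hab W_deriv) as [c0 [_ E]].
  pose proof (Hpos c0). pose proof (phi_pos v m c0).
  assert (0 <= kap * s c0 * phi v m c0 * (b - a)).
  { apply Rmult_le_pos; [|lra]. apply Rmult_le_pos; [|lra]. apply Rmult_le_pos; lra. }
  lra.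
Qed.

Lemma W_mono_down a b : a <= b -> kap <= 0 -> W b <= W a.
Proof.
  intros Hab Hk. destruct (mvt W (fun x => kap * s x * phi v m x) a b Hab W_deriv) as [c0 [_ E]].
  pose proof (Hpos c0). pose proof (phi_pos v m c0).
  assert (0 <= - kap * s c0 * phi v m c0 * (b - a)).
  { apply Rmult_le_pos; [|lra]. apply Rmult_le_pos; [|lra]. apply Rmult_le_pos; lra. }
  lra.
Qed.

Lemma expo_ge1 a b : 0 <= a + b -> 1 <= exp a * exp b.
Proof.
  intros H. rewrite <- exp_plus. rewrite <- exp_0. apply exp_le_exp. lra.
Qed.

Lemma W_zero y0 : W y0 = 0.
Proof.
  destruct (Rtotal_order (W y0) 0) as [Hn|[Hz|Hp]]; auto; exfalso;
  destruct (Rle_dec 0 kap) as [Hk|Hk].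
  - (* W y0 < 0, kap >= 0 : left blow-up *)
    set (k := - W y0).
    apply (not_int_left s S k (Rmin (y0 - 1) (m - 4))); auto.
    + apply s_cont.
    + unfold k; lra.
    + intros y Hy. pose proof (Rmin_l (y0 - 1) (m - 4)). pose proof (Rmin_r (y0 - 1) (m - 4)).
      destruct (mvt u (fun x => W x * psi2 v m x) y (y + 1) ltac:(lra) u_deriv) as [xi [Hxi E]].
      assert (HW : W xi <= W y0) by (apply W_mono_up; lra).
      assert (Hps : psi2 v m (y + 1) <= psi2 v m xi).
      { unfold psi2. apply exp_le_exp. apply Rmult_le_compat_r.
        apply Rlt_le, Rinv_0_lt_compat; auto. nra. }
      pose proof (psi2_ge1 v m xi Hv). pose proof (u_pos (y + 1)).
      assert (Hu : k * psi2 v m (y + 1) <= u y).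
      { unfold k in *. nra. }
      rewrite s_eq. apply Rle_trans with (k * psi2 v m (y + 1) * phi v m y).
      * rewrite Rmult_assoc. rewrite <- (Rmult_1_r k) at 1. apply Rmult_le_compat_l. unfold k; lra.
        unfold psi2, phi. apply expo_ge1.
        apply Rle_trans with (((y + 1 - m) ^ 2 - (y - m) ^ 2 / 2) / v).
        apply Rdiv_le_0_compat; [nra|lra].
        right. field. lra.
      * apply Rmult_le_compat_r. apply Rlt_le, phi_pos. auto.
  - (* W y0 < 0, kap <= 0 : u decreases to negative *)
    set (k := - W y0).
    set (y := y0 + u y0 / k + 1).
    assert (Hk0 : 0 < k) by (unfold k; lra).
    pose proof (u_pos y0).
    assert (Hq : 0 < u y0 / k) by (apply Rdiv_lt_0_compat; lra).
    destruct (mvt u (fun x => W x * psi2 v m x) y0 y ltac:(unfold y; lra) u_deriv) as [xi [Hxi E]].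
    assert (HW : W xi <= W y0) by (apply W_mono_down; lra).
    pose proof (psi2_ge1 v m xi Hv). pose proof (u_pos y).
    assert (W xi * psi2 v m xi <= - k) by (unfold k in *; nra).
    assert (u y - u y0 <= - k * (y - y0)) by (rewrite E; apply Rmult_le_compat_r; unfold y; lra).
    assert (k * (y - y0) = u y0 + k) by (unfold y; field; lra).
    lra.
  - (* W y0 > 0, kap >= 0 : right blow-up *)
    set (k := W y0).
    apply (not_int_right s S k (Rmax (y0 + 1) (m + 4))); auto.
    + apply s_cont.
    + intros y Hy. pose proof (Rmax_l (y0 + 1) (m + 4)). pose proof (Rmax_r (y0 + 1) (m + 4)).
      destruct (mvt u (fun x => W x * psi2 v m x) (y - 1) y ltac:(lra) u_deriv) as [xi [Hxi E]].
      assert (HW : W y0 <= W xi) by (apply W_mono_up; lra).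
      assert (Hps : psi2 v m (y - 1) <= psi2 v m xi).
      { unfold psi2. apply exp_le_exp. apply Rmult_le_compat_r.
        apply Rlt_le, Rinv_0_lt_compat; auto. nra. }
      pose proof (psi2_ge1 v m xi Hv). pose proof (u_pos (y - 1)).
      assert (Hu : k * psi2 v m (y - 1) <= u y).
      { unfold k in *. replace (y - (y - 1)) with 1 in E by ring. nra. }
      rewrite s_eq. apply Rle_trans with (k * psi2 v m (y - 1) * phi v m y).
      * rewrite Rmult_assoc. rewrite <- (Rmult_1_r k) at 1. apply Rmult_le_compat_l. unfold k; lra.
        unfold psi2, phi. apply expo_ge1.
        apply Rle_trans with (((y - 1 - m) ^ 2 - (y - m) ^ 2 / 2) / v).
        apply Rdiv_le_0_compat; [nra|lra].
        right. field. lra.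
      * apply Rmult_le_compat_r. apply Rlt_le, phi_pos. auto.
  - (* W y0 > 0, kap <= 0 : going left u decreases to negative *)
    set (k := W y0).
    set (y := y0 - u y0 / k - 1).
    assert (Hk0 : 0 < k) by (unfold k; lra).
    pose proof (u_pos y0).
    assert (Hq : 0 < u y0 / k) by (apply Rdiv_lt_0_compat; lra).
    destruct (mvt u (fun x => W x * psi2 v m x) y y0 ltac:(unfold y; lra) u_deriv) as [xi [Hxi E]].
    assert (HW : W y0 <= W xi) by (apply W_mono_down; lra).
    pose proof (psi2_ge1 v m xi Hv). pose proof (u_pos y).
    assert (k <= W xi * psi2 v m xi) by (unfold k in *; nra).
    assert (k * (y0 - y) <= u y0 - u y) by (rewrite E; apply Rmult_le_compat_r; unfold y; lra).
    assert (k * (y0 - y) = u y0 + k) by (unfold y; field; lra).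
    lra.
Qed.

Lemma ode_solution : c = - / v /\ forall x, s x = u 0 * phi v m x.
Proof.
  split.
  - assert (E1 : Derive W 0 = kap * s 0 * phi v m 0) by (apply is_derive_unique, W_deriv).
    assert (E2 : Derive W 0 = 0).
    { apply is_derive_unique. apply (is_derive_ext (fun _ => 0) _ 0).
      intros; rewrite W_zero; auto. apply (@is_derive_const R_AbsRing R_NormedModule). }
    pose proof (Hpos 0). pose proof (phi_pos v m 0).
    assert (kap = 0).
    { rewrite E2 in E1. symmetry in E1. apply Rmult_integral in E1. destruct E1 as [E1|E1]; [|lra].
      apply Rmult_integral in E1. destruct E1; lra. }
    unfold kap in H3. lra.
  - intros x. rewrite s_eq. f_equal.
    destruct (Rle_dec 0 x).
    + destruct (mvt u (fun x => W x * psi2 v m x) 0 x r u_deriv) as [xi [_ E]].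
      rewrite W_zero in E. lra.
    + destruct (mvt u (fun x => W x * psi2 v m x) x 0 ltac:(lra) u_deriv) as [xi [_ E]].
      rewrite W_zero in E. lra.
Qed.

End ODE.

Section Root.
Variables (beta K nu gamma eta xi zeta : R).
Hypotheses (Hb : 0 < beta) (HK : 0 < K) (Hnu : 0 < nu) (Hg : 0 < gamma)
  (He : 0 < eta) (Hxi : 0 < xi) (Hz : 0 < zeta).

Definition den (y : R) := xi + zeta * (zeta * y / (eta + zeta * y) - 1) ^ 2
          + zeta * sqrt (beta / (eta + zeta * y)).

Definition gfun (y : R) :=
  K * (gamma - eta * (zeta * y / (eta + zeta * y)) - sqrt beta * sqrt (eta + zeta * y))
  - nu / den y - (1 + xi * K) * y.

Lemma alg_eq_g y : alg_eq beta K nu gamma eta xi zeta y <-> gfun y = 0.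
Proof. unfold alg_eq, gfun, F_fun, den. split; intros; lra. Qed.

Lemma den_pos y : 0 <= y -> 0 < den y.
Proof.
  intros Hy. unfold den. pose proof (pow2_ge_0 (zeta * y / (eta + zeta * y) - 1)).
  pose proof (sqrt_pos (beta / (eta + zeta * y))). nra.
Qed.

Lemma F_pos y : 0 <= y -> 0 < nu / den y.
Proof. intros; apply Rdiv_lt_0_compat; auto; apply den_pos; auto. Qed.

Lemma r_mono y1 y2 : 0 <= y1 <= y2 ->
  zeta * y1 / (eta + zeta * y1) <= zeta * y2 / (eta + zeta * y2).
Proof.
  intros Hy.
  assert (E : zeta * y2 / (eta + zeta * y2) - zeta * y1 / (eta + zeta * y1)
            = zeta * eta * (y2 - y1) / ((eta + zeta * y1) * (eta + zeta * y2))) by (field; split; nra).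
  assert (0 <= zeta * eta * (y2 - y1) / ((eta + zeta * y1) * (eta + zeta * y2))).
  { apply Rdiv_le_0_compat. apply Rmult_le_pos; [apply Rmult_le_pos; lra | lra]. apply Rmult_lt_0_compat; nra. }
  lra.
Qed.

Lemma den_mono y1 y2 : 0 <= y1 <= y2 -> den y2 <= den y1.
Proof.
  intros Hy. unfold den.
  assert (E : forall y, 0 <= y -> zeta * y / (eta + zeta * y) - 1 = - (eta / (eta + zeta * y))).
  { intros y H0. field. nra. }
  rewrite !E by lra.
  assert (A : eta / (eta + zeta * y2) <= eta / (eta + zeta * y1)).
  { unfold Rdiv. apply Rmult_le_compat_l. lra. apply Rinv_le_contravar; nra. }
  assert (A0 : 0 <= eta / (eta + zeta * y2)) by (apply Rdiv_le_0_compat; nra).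
  assert (B : sqrt (beta / (eta + zeta * y2)) <= sqrt (beta / (eta + zeta * y1))).
  { apply sqrt_le_1_alt. unfold Rdiv. apply Rmult_le_compat_l. lra. apply Rinv_le_contravar; nra. }
  assert ((- (eta / (eta + zeta * y2))) ^ 2 <= (- (eta / (eta + zeta * y1))) ^ 2) by nra.
  nra.
Qed.

Lemma g_decr y1 y2 : 0 <= y1 < y2 -> gfun y2 < gfun y1.
Proof.
  intros Hy. unfold gfun.
  pose proof (r_mono y1 y2 ltac:(lra)).
  assert (sqrt (eta + zeta * y1) <= sqrt (eta + zeta * y2)) by (apply sqrt_le_1_alt; nra).
  pose proof (den_mono y1 y2 ltac:(lra)).
  pose proof (den_pos y2 ltac:(lra)).
  assert (nu / den y1 <= nu / den y2).
  { unfold Rdiv. apply Rmult_le_compat_l. lra. apply Rinv_le_contravar; auto. }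
  pose proof (sqrt_pos beta).
  assert (K * eta * (zeta * y1 / (eta + zeta * y1)) <= K * eta * (zeta * y2 / (eta + zeta * y2))).
  { apply Rmult_le_compat_l; nra. }
  assert (K * sqrt beta * sqrt (eta + zeta * y1) <= K * sqrt beta * sqrt (eta + zeta * y2)).
  { apply Rmult_le_compat_l; nra. }
  assert (xi * K * (y2 - y1) >= 0) by (apply Rle_ge; apply Rmult_le_pos; [apply Rmult_le_pos|]; lra).
  lra.
Qed.

Lemma g_cont a : 0 <= a -> continuity_pt gfun a.
Proof.
  intros Ha. apply continuity_pt_filterlim.
  apply (@ex_derive_continuous R_AbsRing R_NormedModule).
  pose proof (den_pos a Ha). unfold gfun, den in *.
  auto_derive. repeat split; try nra. apply Rmult_lt_0_compat; auto. apply Rinv_0_lt_compat; nra.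
Qed.

Lemma g0_pos : basic_R0 beta K nu gamma eta xi zeta > 1 -> 0 < gfun 0.
Proof.
  intros HR. unfold basic_R0 in HR. unfold gfun, den.
  replace (zeta * 0 / (eta + zeta * 0)) with 0 by (field; lra).
  replace (eta + zeta * 0) with eta by ring.
  replace (sqrt beta * sqrt eta) with (sqrt (eta * beta)) by (rewrite sqrt_mult; lra).
  replace ((0 - 1) ^ 2) with 1 by ring.
  set (d := xi + zeta * 1 + zeta * sqrt (beta / eta)).
  assert (Hd : 0 < d) by (unfold d; pose proof (sqrt_pos (beta / eta)); nra).
  assert (K / nu * (gamma - sqrt (eta * beta)) * d > 1) by (unfold d; rewrite Rmult_1_r; auto).
  assert (K * (gamma - sqrt (eta * beta)) * d > nu).
  { apply Rmult_gt_compat_r with (r := nu) in H; auto.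
    replace (K / nu * (gamma - sqrt (eta * beta)) * d * nu) with (K * (gamma - sqrt (eta * beta)) * d) in H by (field; lra).
    lra. }
  assert (nu / d < K * (gamma - sqrt (eta * beta))).
  { apply Rmult_lt_reg_r with d; auto. unfold Rdiv. rewrite Rmult_assoc, Rinv_l by lra. lra. }
  lra.
Qed.

Lemma gM_neg : gfun (K * gamma + 1) < 0.
Proof.
  set (M := K * gamma + 1).
  assert (HM : 0 <= M) by (unfold M; nra).
  unfold gfun. pose proof (F_pos M HM).
  pose proof (r_mono 0 M ltac:(lra)).
  replace (zeta * 0 / (eta + zeta * 0)) with 0 in H0 by (field; lra).
  pose proof (sqrt_pos beta). pose proof (sqrt_pos (eta + zeta * M)).
  assert (0 <= K * eta * (zeta * M / (eta + zeta * M))) by (apply Rmult_le_pos; nra).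
  assert (0 <= K * (sqrt beta * sqrt (eta + zeta * M))) by (apply Rmult_le_pos; nra).
  assert (xi * K * M >= 0) by (apply Rle_ge; apply Rmult_le_pos; nra).
  unfold M in *. nra.
Qed.

Lemma root_exists : basic_R0 beta K nu gamma eta xi zeta > 1 ->
  exists IE, 0 < IE /\ alg_eq beta K nu gamma eta xi zeta IE /\
    (forall y, 0 < y -> alg_eq beta K nu gamma eta xi zeta y -> y = IE).
Proof.
  intros HR.
  pose proof (g0_pos HR). pose proof gM_neg.
  assert (HM : 0 < K * gamma + 1) by nra.
  destruct (Ranalysis5.IVT_interv (fun y => - gfun y) 0 (K * gamma + 1)) as [z [Hz1 Hz2]].
  - intros a Ha. apply continuity_pt_opp. apply g_cont. lra.
  - auto.
  - lra.
  - lra.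
  - assert (Hg0 : gfun z = 0) by lra.
    assert (z <> 0) by (intro; subst; lra).
    exists z. split; [lra|]. split. apply alg_eq_g; auto.
    intros y Hy Hay. apply alg_eq_g in Hay.
    destruct (Rtotal_order y z) as [L|[E|L]]; auto.
    + pose proof (g_decr y z ltac:(lra)). lra.
    + pose proof (g_decr z y ltac:(lra)). lra.
Qed.

End Root.

Lemma sq_lemma v : 0 < v -> sqrt (1 / (2 * PI * v)) * (sqrt (2 * v) * sqrt PI) = 1.
Proof.
  intros Hv. pose proof PI_RGT_0.
  rewrite <- sqrt_mult by lra. rewrite <- sqrt_mult.
  - replace (1 / (2 * PI * v) * (2 * v * PI)) with 1 by (field; lra). apply sqrt_1.
  - apply Rlt_le, Rdiv_lt_0_compat; nra.
  - nra.
Qed.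

Lemma int_unique f l1 l2 : is_int_R f l1 -> is_int_R f l2 -> l1 = l2.
Proof.
  intros H1 H2. unfold is_int_R in *.
  assert (P1 := Proper_StrongProper _ (Rbar_locally_filter m_infty)).
  assert (P2 := Proper_StrongProper _ (Rbar_locally_filter p_infty)).
  apply (@is_RInt_gen_unique R_CompleteNormedModule _ _ P1 P2) in H1.
  apply (@is_RInt_gen_unique R_CompleteNormedModule _ _ P1 P2) in H2.
  congruence.
Qed.

Lemma ode_id beta eta p q zeta I K xi gamma x :
  p ^ 2 = beta -> q ^ 2 = eta + zeta * I -> 0 < p -> 0 < q -> 0 < K ->
  beta * ((x - zeta * I / (eta + zeta * I)) ^ 2 / (p / q) ^ 2 - / (p / q))
  + (gamma - eta * x ^ 2 - (xi + zeta * (1 - x) ^ 2 + / K) * I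
     - K * (gamma - (/ K + eta * zeta / (eta + zeta * I) + xi) * I - p * q) / K) = 0.
Proof.
  intros Hp Hq Hp0 Hq0 HK. subst beta. rewrite <- Hq.
  replace eta with (q ^ 2 - zeta * I) by lra.
  field. repeat split; lra.
Qed.

Lemma S_id beta eta p q zeta I K xi gamma :
  p ^ 2 = beta -> q ^ 2 = eta + zeta * I -> 0 < p -> 0 < q -> 0 < K ->
  K * beta * (- / (p / q) - (- gamma + xi * I + zeta * I
       - (eta + zeta * I) * (zeta * I / (eta + zeta * I)) ^ 2 + I / K) / beta)
  = K * (gamma - (/ K + eta * zeta / (eta + zeta * I) + xi) * I - p * q).
Proof.
  intros Hp Hq Hp0 Hq0 HK. subst beta. rewrite <- Hq.
  replace eta with (q ^ 2 - zeta * I) by lra.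
  field. repeat split; lra.
Qed.

Theorem proposition2 (beta K nu gamma eta xi zeta : R) :
  0 < beta -> 0 < K -> 0 < nu -> 0 < gamma -> 0 < eta -> 0 < xi -> 0 < zeta ->
  gamma > eta ->
  gamma > sqrt (eta * beta) ->
  basic_R0 beta K nu gamma eta xi zeta > 1 ->
  exists IE : R,
    0 < IE /\ alg_eq beta K nu gamma eta xi zeta IE /\
    (forall y, 0 < y -> alg_eq beta K nu gamma eta xi zeta y -> y = IE) /\
    0 < S_E beta K gamma eta xi zeta IE /\
    endemic_solution beta K nu gamma eta xi zeta
      (s_E beta eta zeta (S_E beta K gamma eta xi zeta IE) IE) IE
      (S_E beta K gamma eta xi zeta IE) /\
    (forall (s : R -> R) (I S : R),
        endemic_solution beta K nu gamma eta xi zeta s I S ->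
        I = IE /\ S = S_E beta K gamma eta xi zeta IE /\
        (forall x, s x = s_E beta eta zeta (S_E beta K gamma eta xi zeta IE) IE x)).
Proof.
  intros Hb HK Hnu Hg He Hxi Hz _ _ HR.
  destruct (root_exists beta K nu gamma eta xi zeta Hb HK Hnu Hg He Hxi Hz HR)
    as [IE [HIE [Halg Huniq]]].
  assert (SF : forall I, 0 < I -> alg_eq beta K nu gamma eta xi zeta I ->
             S_E beta K gamma eta xi zeta I = nu / den beta eta xi zeta I).
  { intros I HI HA. unfold alg_eq, F_fun in HA. unfold S_E, den.
    set (Fv := nu / (xi + zeta * (zeta * I / (eta + zeta * I) - 1) ^ 2 +
                      zeta * sqrt (beta / (eta + zeta * I)))) in *.
    replace Fv with (K * (gamma - eta * (zeta * I / (eta + zeta * I)) -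
      sqrt beta * sqrt (eta + zeta * I)) - (1 + xi * K) * I) by lra.
    field. split; nra. }
  assert (HS : 0 < S_E beta K gamma eta xi zeta IE).
  { rewrite SF by auto. apply (F_pos beta nu eta xi zeta); auto. lra. }
  exists IE. split; auto. split; auto. split; auto. split; auto. split.
  -
    set (S := S_E beta K gamma eta xi zeta IE) in *.
    set (D := eta + zeta * IE).
    assert (HD : 0 < D) by (unfold D; nra).
    set (p := sqrt beta). set (q := sqrt D).
    assert (Hp : 0 < p) by (apply sqrt_lt_R0; auto).
    assert (Hq : 0 < q) by (apply sqrt_lt_R0; auto).
    assert (Hp2 : p ^ 2 = beta) by (apply pow2_sqrt; lra).
    assert (Hq2 : q ^ 2 = D) by (apply pow2_sqrt; lra).
    set (v := sigma2_E beta eta zeta IE).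
    assert (Hvpq : v = p / q) by (unfold v, sigma2_E, p, q, D; apply sqrt_div_alt; auto).
    assert (Hv : 0 < v) by (rewrite Hvpq; apply Rdiv_lt_0_compat; auto).
    set (m := mu_E eta zeta IE).
    set (A := S * sqrt (1 / (2 * PI * v))).
    assert (HA : 0 < A).
    { unfold A. apply Rmult_lt_0_compat; auto. apply sqrt_lt_R0.
      apply Rdiv_lt_0_compat; [lra|]. pose proof PI_RGT_0; nra. }
    assert (Hs : s_E beta eta zeta S IE = fun x => A * phi v m x) by reflexivity.
    rewrite Hs.
    assert (HAS : A * (sqrt (2 * v) * sqrt PI) = S).
    { unfold A. rewrite Rmult_assoc, sq_lemma; auto. ring. }
    split; [|split; [|split; [|split]]].
    + exists (fun x => A * (- (x - m) / v * phi v m x)).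
      exists (fun x => A * (- / v * phi v m x + (- (x - m) / v) * (- (x - m) / v * phi v m x))).
      intros x. split; [|split].
      * apply is_derive_scal. apply phi_deriv; auto.
      * apply is_derive_scal.
        replace (- / v * phi v m x + - (x - m) / v * (- (x - m) / v * phi v m x)) with
          (plus (mult (- / v) (phi v m x)) (mult (- (x - m) / v) (- (x - m) / v * phi v m x))) by reflexivity.
        apply (@is_derive_mult R_AbsRing (fun y => - (y - m) / v) (phi v m)).
        -- auto_derive; auto. field. lra.
        -- apply phi_deriv; auto.
        -- intros; apply Rmult_comm.
      * pose proof (ode_id beta eta p q zeta IE K xi gamma x Hp2 Hq2 Hp Hq HK) as E.
        rewrite <- Hvpq in E.
        assert (Em : m = zeta * IE / (eta + zeta * IE)) by reflexivity.
        rewrite <- Em in E.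
        assert (ES : S = K * (gamma - (/ K + eta * zeta / (eta + zeta * IE) + xi) * IE - p * q))
          by reflexivity.
        rewrite <- ES in E.
        unfold a_fun, b_fun.
        transitivity (A * phi v m x * (beta * ((x - m) ^ 2 / v ^ 2 - / v) +
          (gamma - eta * x ^ 2 - (xi + zeta * (1 - x) ^ 2 + / K) * IE - S / K))).
        { field. lra. }
        rewrite E. ring.
    + rewrite <- HAS. apply int_phi; auto.
    + exists (A * (sqrt (2 * v) * sqrt PI) * (xi + zeta * (m - 1) ^ 2 + zeta * v)).
      split. apply int_bphi; auto.
      rewrite HAS.
      assert (Hden : xi + zeta * (m - 1) ^ 2 + zeta * v = den beta eta xi zeta IE) by reflexivity.
      rewrite Hden. unfold S. rewrite SF by auto. field_simplify. ring.
      apply Rgt_not_eq, (den_pos beta eta xi zeta); auto; lra.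
    + intros x. apply Rmult_lt_0_compat; auto. apply phi_pos.
    + split; auto.
  -
    intros s I S0 Hsol.
    destruct Hsol as [[s1 [s2 Hd]] [Hint [[B [HB HBI]] [Hpos [HS0 HI]]]]].
    set (D := eta + zeta * I).
    assert (HD : 0 < D) by (unfold D; nra).
    set (p := sqrt beta). set (q := sqrt D).
    assert (Hp : 0 < p) by (apply sqrt_lt_R0; auto).
    assert (Hq : 0 < q) by (apply sqrt_lt_R0; auto).
    assert (Hp2 : p ^ 2 = beta) by (apply pow2_sqrt; lra).
    assert (Hq2 : q ^ 2 = D) by (apply pow2_sqrt; lra).
    set (v := sigma2_E beta eta zeta I).
    assert (Hvpq : v = p / q) by (unfold v, sigma2_E, p, q, D; apply sqrt_div_alt; auto).
    assert (Hv : 0 < v) by (rewrite Hvpq; apply Rdiv_lt_0_compat; auto).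
    assert (Hv2 : v ^ 2 = beta / D) by (rewrite Hvpq, <- Hp2, <- Hq2; field; lra).
    set (m := mu_E eta zeta I).
    set (c0 := (- gamma + xi * I + zeta * I - D * m ^ 2 + I / K) / beta).
    set (c := c0 + S0 / (K * beta)).
    assert (Hode : forall x, s2 x = ((x - m) ^ 2 / v ^ 2 + c) * s x).
    { intros x. destruct (Hd x) as [_ [_ E]].
      rewrite Hv2. apply (Rmult_eq_reg_l beta); [|lra].
      transitivity (- (a_fun gamma eta x - (b_fun xi zeta x + / K) * I - S0 / K) * s x).
      lra. unfold c, c0, m, mu_E, a_fun, b_fun, D. field. assert (0 < eta + zeta * I) by nra. repeat split; lra. }
    assert (Hd1 : forall x, is_derive s x (s1 x)) by (intros x; apply (Hd x)).
    assert (Hd2 : forall x, is_derive s1 x (s2 x)) by (intros x; apply (Hd x)).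
    destruct (ode_solution s s1 s2 v m c S0 Hv Hd1 Hd2 Hode Hpos Hint) as [Hc Hsx].
    set (C := s 0 / phi v m 0) in *.
    assert (Hsf : s = fun x => C * phi v m x) by (apply functional_extensionality; auto).
    assert (ES : S0 = S_E beta K gamma eta xi zeta I).
    { replace S0 with (K * beta * (c - c0)) by (unfold c; field; lra).
      rewrite Hc. rewrite Hvpq. unfold c0, m, mu_E, D.
      unfold S_E. fold D. fold q. fold p.
      apply S_id; auto. }
    assert (E1 : S0 = C * (sqrt (2 * v) * sqrt PI)).
    { apply (int_unique s). auto. rewrite Hsf. apply int_phi; auto. }
    assert (E2 : B = C * (sqrt (2 * v) * sqrt PI) * (xi + zeta * (m - 1) ^ 2 + zeta * v)).
    { apply (int_unique (fun x => b_fun xi zeta x * s x)). auto.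
      rewrite Hsf. apply int_bphi; auto. }
    assert (HBn : B = nu) by (apply Rmult_integral in HBI; destruct HBI; lra).
    assert (Hden : xi + zeta * (m - 1) ^ 2 + zeta * v = den beta eta xi zeta I) by reflexivity.
    rewrite <- E1, Hden, HBn in E2.
    assert (Hdp : 0 < den beta eta xi zeta I) by (apply (den_pos beta eta xi zeta); auto; lra).
    assert (EF : S0 = nu / den beta eta xi zeta I) by (rewrite E2; field; lra).
    assert (HalgI : alg_eq beta K nu gamma eta xi zeta I).
    { unfold alg_eq. unfold F_fun. fold (den beta eta xi zeta I).
      rewrite <- EF, ES. unfold S_E. field. split; nra. }
    assert (HIIE : I = IE) by (apply Huniq; auto).
    subst I.
    split; auto. split; auto.
    intros x. rewrite Hsx. fold C.
    unfold s_E. rewrite <- ES. fold v. fold m.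
    fold (phi v m x).
    assert (HC : C = S0 * sqrt (1 / (2 * PI * v))).
    { rewrite E1. rewrite Rmult_assoc, (Rmult_comm _ (sqrt (1 / (2 * PI * v)))), sq_lemma; auto. ring. }
    rewrite HC. reflexivity.
Qed.
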